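(* Let $\mathbb{F}$ be a field, let $n \ne 1$ and $r \le n+1$, and let $\Phi: M_n(\mathbb{F}) \to M_r(\mathbb{F})$ be an additive map preserving zero products. (a) If $\Phi(I_n)$ is not nilpotent, then $r = n$ or $r = n+1$, and there exist a nonzero $\alpha\in\mathbb{F}$, an invertible $S \in M_r(\mathbb{F})$ and a unital ring endomorphism $\tau$ of $\mathbb{F}$ such that $\Phi(A) = \alpha S(A_\tau \oplus 0_{r-n})S^{-1}$ for all $A\in M_n(\mathbb{F})$. (b) If $\Phi(I_n)$ is nilpotent, and (in case $\mathbb{F}$ is an infinite field of characteristic $2$) $\Phi$ is $\mathbb{F}$-linear, then $\Phi(A)\Phi(B) = 0$ for all $A,B \in M_n(\mathbb{F})$.
   Context: A map $\Phi$ preserves zero products if $\Phi(A)\Phi(B)=0$ whenever $AB=0$. For a ring endomorphism $\tau$ of $\mathbb{F}$ and $A=[a_{ij}]$, $A_\tau = [\tau(a_{ij})]$. *)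

(* Defs.v *)
From HB Require Import structures.
From mathcomp Require Import all_boot all_order all_algebra.
Set Implicit Arguments. Unset Strict Implicit. Unset Printing Implicit Defensive.
Import GRing.Theory.
Local Open Scope ring_scope.

Definition mx_nilpotent (F : fieldType) (r : nat) (M : 'M[F]_r) : Prop :=
  exists k : nat, iter k (mulmx M) 1%:M = 0.

Definition preserves_zero_products (F : fieldType) (n r : nat)
  (Phi : 'M[F]_n -> 'M[F]_r) : Prop :=
  forall A B : 'M[F]_n, A *m B = 0 -> Phi A *m Phi B = 0.

Definition additive_map (F : fieldType) (n r : nat)
  (Phi : 'M[F]_n -> 'M[F]_r) : Prop :=
  forall A B : 'M[F]_n, Phi (A + B) = Phi A + Phi B.

Definition F_linear_map (F : fieldType) (n r : nat)
  (Phi : 'M[F]_n -> 'M[F]_r) : Prop :=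
  forall (a : F) (A : 'M[F]_n), Phi (a *: A) = a *: Phi A.

Definition finite_field (F : fieldType) : Prop :=
  exists s : seq F, forall x : F, x \in s.

(* Main.v *)
Require Import Defs.
From HB Require Import structures.
From mathcomp Require Import all_boot all_order all_algebra.
From Stdlib Require Import Classical.
From mathcomp Require Import zify ring.
Import GRing.Theory.
Local Open Scope ring_scope.
Set Implicit Arguments. Unset Strict Implicit. Unset Printing Implicit Defensive.

Lemma rowZ (R : pzSemiRingType) m k (i : 'I_m) (a : R) (A : 'M[R]_(m, k)) :
  row i (a *: A) = a *: row i A.
Proof. by apply/rowP => j; rewrite !mxE. Qed.

Section Indep.
Variables (F : fieldType) (r : nat).

Lemma indep_le k (M : 'M[F]_(k, r)) :
  (forall u : 'rV_k, u *m M = 0 -> u = 0) -> (k <= r)%N.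
Proof.
move=> H; have : kermx M == 0.
  apply/eqP/row_matrixP => i; rewrite row0; apply: H.
  by rewrite -row_mul mulmx_ker row0.
rewrite kermx_eq0 /row_free => /eqP <-; exact: rank_leq_col.
Qed.

Lemma indep3 k (Y : 'M[F]_(k, r)) (z x : 'rV[F]_r) :
  (forall (c : 'rV_k) (c0 f : F), c *m Y + c0 *: z + f *: x = 0 ->
      [/\ c = 0, c0 = 0 & f = 0]) -> (k.+2 <= r)%N.
Proof.
move=> H; suff: (k + 1 + 1 <= r)%N by rewrite !addn1.
apply: (@indep_le _ (col_mx (col_mx Y z) x)) => u.
rewrite -[u]hsubmxK -[lsubmx u]hsubmxK !mul_row_col.
rewrite [rsubmx (lsubmx u)]mx11_scalar [rsubmx u]mx11_scalar !mul_scalar_mx.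
case/H=> -> -> ->; by rewrite !raddf0 !row_mx0.
Qed.

Lemma indep2 k (Y1 Y2 : 'M[F]_(k, r)) :
  (forall c1 c2 : 'rV_k, c1 *m Y1 + c2 *m Y2 = 0 -> c1 = 0 /\ c2 = 0) ->
  (k + k <= r)%N.
Proof.
move=> H; apply: (@indep_le _ (col_mx Y1 Y2)) => u.
by rewrite -[u]hsubmxK mul_row_col => /H [-> ->]; rewrite row_mx0.
Qed.

Lemma rowv0 m (M : 'M[F]_(r, m)) : (forall x : 'rV_r, x *m M = 0) -> M = 0.
Proof. by move=> H; apply/row_matrixP => i; rewrite row0 rowE H. Qed.

Lemma exists_row m (M : 'M[F]_(r, m)) : M != 0 -> exists x : 'rV_r, x *m M != 0.
Proof.
move=> nz; apply: NNPP => H; move/eqP: nz; apply; apply: rowv0 => x.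
apply/eqP; apply: negbNE; apply/negP => hx; apply: H; by exists x.
Qed.

End Indep.

Lemma assemble (F : fieldType) n m r (Hr : (n + m)%N = r) (Phi : 'M[F]_n -> 'M[F]_r)
  (alpha : F) (tau : {rmorphism F -> F}) (U : 'M[F]_(n, r)) (K : 'M[F]_(m, r)) :
  (forall u : 'rV_(n + m), u *m col_mx U K = 0 -> u = 0) ->
  (forall A, U *m Phi A = alpha *: (map_mx tau A *m U)) ->
  (forall A, K *m Phi A = 0) ->
  exists S : 'M[F]_r, S \in unitmx /\ forall A,
    Phi A = alpha *: (S *m castmx (Hr, Hr) (block_mx (map_mx tau A) 0 0 (0 : 'M[F]_m)) *m invmx S).
Proof.
case: r / Hr Phi U K => Phi U K hind hU hK.
set T := col_mx U K.
have Tu : T \in unitmx.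
  rewrite -row_free_unit -kermx_eq0; apply/eqP/row_matrixP => i; rewrite row0.
  by apply: hind; rewrite -row_mul mulmx_ker row0.
exists (invmx T); split; first by rewrite unitmx_inv.
move=> A; rewrite castmx_id invmxK -[Phi A](mulKmx Tu) /T mul_col_mx hU hK.
rewrite -!mulmxA mul_block_col !mul0mx !addr0.
by rewrite [RHS]scalemxAr scale_col_mx scaler0.
Qed.
Section KISec.
Variables (F : fieldType) (n r : nat) (Phi : 'M[F]_n -> 'M[F]_r).
Hypothesis hadd : additive_map Phi.

Lemma Phi0 : Phi 0 = 0.
Proof.
have h := hadd 0 0; rewrite addr0 in h.
by apply: (addrI (Phi 0)); rewrite addr0 -h.
Qed.

Lemma PhiN A : Phi (- A) = - Phi A.
Proof. by apply/eqP; rewrite -addr_eq0 -hadd addNr Phi0. Qed.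

Lemma PhiB A B : Phi (A - B) = Phi A - Phi B.
Proof. by rewrite hadd PhiN. Qed.

Lemma Phi_sum I (s : seq I) (P : pred I) (f : I -> 'M_n) :
  Phi (\sum_(i <- s | P i) f i) = \sum_(i <- s | P i) Phi (f i).
Proof. exact: (big_morph Phi hadd Phi0). Qed.

Lemma Phi_expand A :
  Phi A = \sum_i \sum_j Phi (A i j *: delta_mx i j).
Proof.
by rewrite {1}(matrix_sum_delta A) Phi_sum; apply: eq_bigr => i _; rewrite Phi_sum.
Qed.

Hypothesis hzp : preserves_zero_products Phi.
Hypothesis hn2 : (1 < n)%N.

Definition phi (A B : 'M[F]_n) := Phi A *m Phi B.
Definition good (a : 'M[F]_n) := forall x y, phi (x *m a) y = phi x (a *m y).

Lemma good_idem e : e *m e = e -> good e.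
Proof.
move=> ee x y; rewrite /phi.
have h1 : Phi (x *m e) *m Phi (y - e *m y) = 0.
  by apply: hzp; rewrite mulmxBr !mulmxA -(mulmxA x e e) ee subrr.
have h2 : Phi (x - x *m e) *m Phi (e *m y) = 0.
  by apply: hzp; rewrite mulmxBl !mulmxA -(mulmxA x e e) ee subrr.
rewrite !PhiB mulmxBr in h1; rewrite !PhiB mulmxBl in h2.
move/eqP: h1; rewrite subr_eq0 => /eqP ->.
by move/eqP: h2; rewrite subr_eq0 => /eqP ->.
Qed.

Lemma good0 : good 0.
Proof. by move=> x y; rewrite /phi mulmx0 mul0mx Phi0 mulmx0 mul0mx. Qed.

Lemma goodD a b : good a -> good b -> good (a + b).
Proof.
move=> ha hb x y; move: (ha x y) (hb x y).
by rewrite /phi mulmxDr mulmxDl !hadd mulmxDl mulmxDr => -> ->.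
Qed.

Lemma goodB a b : good a -> good b -> good (a - b).
Proof.
move=> ha hb x y; move: (ha x y) (hb x y).
by rewrite /phi mulmxBr mulmxBl !PhiB mulmxBl mulmxBr => -> ->.
Qed.

Lemma goodM a b : good a -> good b -> good (a *m b).
Proof. by move=> ha hb x y; rewrite mulmxA hb ha mulmxA. Qed.

Lemma good_sum I (s : seq I) (P : pred I) (f : I -> 'M_n) :
  (forall i, P i -> good (f i)) -> good (\sum_(i <- s | P i) f i).
Proof. move=> H; apply: big_ind => //; [exact: good0 | exact: goodD]. Qed.

Lemma good_off (i j : 'I_n) c : i != j -> good (c *: delta_mx i j).
Proof.
move=> ij; have ji : (j == i) = false by rewrite eq_sym (negbTE ij).
have e1 : (delta_mx i i + c *: delta_mx i j) *m (delta_mx i i + c *: delta_mx i j)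
   = delta_mx i i + c *: delta_mx i j :> 'M[F]_n.
  rewrite mulmxDl !mulmxDr -!scalemxAl -!scalemxAr !mul_delta_mx_cond eqxx ji.
  by rewrite !mulr1n !mulr0n !scaler0 !addr0.
have -> : c *: delta_mx i j = (delta_mx i i + c *: delta_mx i j) - delta_mx i i :> 'M[F]_n.
  by rewrite addrAC subrr add0r.
by apply: goodB; apply: good_idem => //; rewrite mul_delta_mx.
Qed.

Definition i0 : 'I_n := Ordinal (ltnW hn2).
Definition i1 : 'I_n := Ordinal hn2.

Lemma other (i : 'I_n) : exists j, i != j.
Proof.
case: (eqVneq i i0) => [->|h]; last by exists i0.
by exists i1.
Qed.

Lemma good_diag (i : 'I_n) c : good (c *: delta_mx i i).
Proof.
have [j ij] := other i.
have -> : c *: delta_mx i i = (c *: delta_mx i j) *m (1 *: delta_mx j i) :> 'M[F]_n.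
  by rewrite scale1r -scalemxAl mul_delta_mx.
by apply: goodM; apply: good_off => //; rewrite eq_sym.
Qed.

Lemma goodall A : good A.
Proof.
rewrite (matrix_sum_delta A); apply: good_sum => i _; apply: good_sum => j _.
by case: (eqVneq i j) => [->|]; [apply: good_diag | apply: good_off].
Qed.

Local Notation W := (Phi 1%:M).

Lemma KI A B : Phi A *m Phi B = W *m Phi (A *m B).
Proof. by have := goodall A 1%:M B; rewrite /phi mul1mx. Qed.

Lemma KI2 A B : Phi A *m Phi B = Phi (A *m B) *m W.
Proof. by have := goodall B A 1%:M; rewrite /phi mulmx1 => <-. Qed.

Lemma KIC A : W *m Phi A = Phi A *m W.
Proof. by have := goodall A 1%:M 1%:M; rewrite /phi mul1mx mulmx1. Qed.

Definition pw k := iter k (mulmx W) 1%:M.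

Lemma pwS k : pw k.+1 = W *m pw k.
Proof. by []. Qed.

Lemma pwSr k : pw k.+1 = pw k *m W.
Proof.
elim: k => [|k IH]; first by rewrite /pw /= mulmx1 mul1mx.
change (W *m pw k.+1 = (W *m pw k) *m W); by rewrite -mulmxA -IH.
Qed.

Lemma PhiCpw A k : Phi A *m pw k = pw k *m Phi A.
Proof.
elim: k => [|k IH]; first by rewrite /pw /= mulmx1 mul1mx.
by rewrite pwS mulmxA -KIC -mulmxA IH mulmxA.
Qed.

End KISec.
Section PartB.
Variables (F : fieldType) (n r : nat) (Phi : 'M[F]_n -> 'M[F]_r).
Hypotheses (hadd : additive_map Phi) (hzp : preserves_zero_products Phi) (hn2 : (1 < n)%N).
Local Notation W := (Phi 1%:M).
Local Notation pw := (pw Phi).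
Let KI := KI hadd hzp hn2.
Let KI2 := KI2 hadd hzp hn2.
Let KIC := KIC hadd hzp hn2.
Let PhiCpw := PhiCpw hadd hzp hn2.
Let Phi0 := Phi0 hadd.

Lemma entry_nz (x : 'rV[F]_r) (M : 'M[F]_r) C : x *m M *m Phi C != 0 ->
  exists i j, x *m M *m Phi (C i j *: delta_mx i j) != 0.
Proof.
move=> nz; apply: NNPP => H; move/eqP: nz; apply.
rewrite (Phi_expand hadd C) mulmx_sumr big1 // => i _; rewrite mulmx_sumr big1 // => j _.
apply/eqP; apply: negbNE; apply/negP => hx; apply: H; by exists i, j.
Qed.

Lemma matrows_mul k (y : 'I_k -> 'rV[F]_r) (M : 'M[F]_r) :
  (\matrix_(i < k) y i) *m M = \matrix_(i < k) (y i *m M).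
Proof. by apply/row_matrixP => i; rewrite row_mul !rowK. Qed.

Lemma sum_if k (c : 'rV[F]_k) (l : 'I_k) (z : 'rV[F]_r) :
  c *m (\matrix_(i < k) (if i == l then z else 0)) = c 0 l *: z.
Proof.
rewrite mulmx_sum_row (bigD1 l) //= rowK eqxx big1 ?addr0 // => i /negbTE il.
by rewrite rowK il scaler0.
Qed.

Lemma lemB (x : 'rV[F]_r) m C : (0 < m)%N -> x *m pw m *m Phi C != 0 ->
  (forall A, x *m pw m.+1 *m Phi A = 0) -> (n.+2 <= r)%N.
Proof.
case: m => // m _ nz hm.
have [i [j nzij]] := entry_nz nz.
move: nzij; set a := C i j => nzij.
set X1 := x *m pw m.
set z := x *m pw m.+1 *m Phi (a *: delta_mx i j) in nzij *.
have xpw : x *m pw m.+1 = X1 *m W by rewrite pwSr mulmxA.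
have f1 B : z *m Phi B = 0.
  by rewrite /z -mulmxA KI mulmxA -(mulmxA x) -pwSr hm.
pose y (k : 'I_n) := X1 *m Phi (a *: delta_mx i k).
have f2 (k l : 'I_n) : y k *m Phi (delta_mx l j) = if k == l then z else 0.
  rewrite /y -mulmxA KI mulmxA -xpw -scalemxAl mul_delta_mx_cond.
  have [kl|kl] := eqVneq k l; first by rewrite mulr1n.
  by rewrite mulr0n scaler0 Phi0 mulmx0.
have f3 k D : y k *m Phi D *m W = 0.
  rewrite /y -(mulmxA X1) KI mulmxA -xpw -mulmxA -KIC mulmxA -(mulmxA x) -pwSr.
  exact: hm.
have f4 : (forall D, x *m Phi D *m W = 0) -> z = 0.
  by move=> H; rewrite /z -mulmxA -PhiCpw pwS !mulmxA H mul0mx.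
apply: (@indep3 F r n (\matrix_(k < n) y k) z x) => c c0 f h.
have hf : f = 0.
  case: (eqVneq f 0) => // fn0; exfalso; move/eqP: nzij; apply; apply: f4 => D.
  have := congr1 (fun v => v *m (Phi D *m W)) h.
  rewrite !mulmxDl mul0mx -mulmxA matrows_mul.
  have -> : \matrix_(k < n) (y k *m (Phi D *m W)) = 0.
    by apply/row_matrixP => k; rewrite rowK row0 mulmxA f3.
  rewrite mulmx0 add0r -!scalemxAl mulmxA f1 mul0mx scaler0 add0r.
  by move/eqP; rewrite scaler_eq0 (negbTE fn0) mulmxA => /eqP.
have hc : c = 0.
  apply/rowP => l; rewrite mxE.
  have := congr1 (fun v => v *m Phi (delta_mx l j)) h.
  rewrite !mulmxDl mul0mx -mulmxA matrows_mul.
  have -> : \matrix_(k < n) (y k *m Phi (delta_mx l j)) =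
            \matrix_(k < n) (if k == l then z else 0).
    by apply/row_matrixP => k; rewrite !rowK f2.
  rewrite sum_if -!scalemxAl f1 hf scale0r scaler0 !addr0.
  by move/eqP; rewrite scaler_eq0 (negbTE nzij) orbF => /eqP.
move: h; rewrite hc hf mul0mx add0r scale0r addr0 => /eqP.
by rewrite scaler_eq0 (negbTE nzij) orbF => /eqP.
Qed.

Lemma downB k (x : 'rV[F]_r) : (r <= n.+1)%N ->
  (forall A, x *m pw k.+1 *m Phi A = 0) -> forall A, x *m pw 1 *m Phi A = 0.
Proof.
move=> hr; elim: k => [//|k IH] H; apply: IH => A.
apply/eqP; apply: negbNE; apply/negP => nz.
have := lemB (m := k.+1) isT nz H.
by rewrite ltnNge hr.
Qed.

Lemma partB : (r <= n.+1)%N -> mx_nilpotent W ->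
  forall A B : 'M[F]_n, Phi A *m Phi B = 0.
Proof.
move=> hr [k hk] A B; rewrite KI.
apply: rowv0 => x; rewrite mulmxA.
have hk' : pw k = 0 := hk.
have H : forall D, x *m pw k.+1 *m Phi D = 0.
  by move=> D; rewrite pwSr hk' mul0mx mulmx0 mul0mx.
by have := downB hr H (A *m B); rewrite /pw /= mulmx1.
Qed.

End PartB.
Section MkRM.
Variables (F : fieldType) (f : F -> F).
Hypotheses (fD : forall x y, f (x + y) = f x + f y) (fM : forall x y, f (x * y) = f x * f y) (f1 : f 1 = 1).
Definition mkrm_fun := f.
Lemma mkrm_zmod : zmod_morphism mkrm_fun.
Proof. move=> x y. rewrite /mkrm_fun.
have f0 : f 0 = 0. by apply: (addrI (f 0)); rewrite -fD !addr0.
have fN : forall z, f (- z) = - f z. by move=> z; apply/eqP; rewrite -addr_eq0 -fD addNr f0.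
by rewrite fD fN. Qed.
Lemma mkrm_mon : monoid_morphism mkrm_fun.
Proof. by split; [exact: f1 | move=> x y; exact: fM]. Qed.
HB.instance Definition _ := GRing.isZmodMorphism.Build F F mkrm_fun mkrm_zmod.
HB.instance Definition _ := GRing.isMonoidMorphism.Build F F mkrm_fun mkrm_mon.
Definition mkrm : {rmorphism F -> F} := mkrm_fun.
Lemma mkrmE x : mkrm x = f x. Proof. by []. Qed.
End MkRM.

Section PartA.
Variables (F : fieldType) (n r : nat) (Phi : 'M[F]_n -> 'M[F]_r).
Hypotheses (hadd : additive_map Phi) (hzp : preserves_zero_products Phi) (hn2 : (1 < n)%N).
Hypothesis hr : (r <= n.+1)%N.
Hypothesis hnil : ~ mx_nilpotent (Phi 1%:M).
Local Notation W := (Phi 1%:M).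
Local Notation pw := (pw Phi).
Let KI := KI hadd hzp hn2.
Let KI2 := KI2 hadd hzp hn2.
Let KIC := KIC hadd hzp hn2.
Let PhiCpw := PhiCpw hadd hzp hn2.
Let Phi0 := Phi0 hadd.
Let e0 := i0 hn2.
Local Notation E := (@delta_mx F n n).
Local Notation P := (Phi (E e0 e0)).

Lemma pwnz k : pw k != 0.
Proof. by apply/eqP => h; apply: hnil; exists k. Qed.

Lemma W_sum : W = \sum_i Phi (E i i).
Proof.
rewrite (Phi_expand hadd); apply: eq_bigr => i _.
rewrite (bigD1 i) //= big1 ?addr0 => [|j ji]; first by rewrite mxE eqxx scale1r.
by rewrite mxE eq_sym (negbTE ji) scale0r Phi0.
Qed.

Lemma PP : P *m P = W *m P.
Proof. by rewrite KI mul_delta_mx. Qed.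

Lemma PW : P *m W = W *m P.
Proof. by rewrite KIC. Qed.

Lemma PhiP (i : 'I_n) : Phi (E i e0) *m P = W *m Phi (E i e0).
Proof. by rewrite KI mul_delta_mx. Qed.

Lemma pwP_nz k : pw k *m P != 0.
Proof.
apply/eqP => h; have := pwnz k.+3; rewrite pwSr W_sum mulmx_sumr big1 ?eqxx // => i _.
have := congr1 (fun M => Phi (E i e0) *m M *m Phi (E e0 i)) h.
rewrite mulmx0 mul0mx mulmxA PhiCpw -(mulmxA (pw k)) PhiP mulmxA -mulmxA KI mul_delta_mx.
by rewrite pwSr pwSr mulmxA.
Qed.

Section Rank1.
Variables (x0 : 'rV[F]_r) (j0 : 'I_r).
Let d := x0 *m (W *m P).
Hypothesis hj0 : d 0 j0 != 0.

Lemma dnz : d != 0.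
Proof. by apply: contraNneq hj0 => ->; rewrite mxE. Qed.

Definition coef (y : 'rV[F]_r) := y 0 j0 / d 0 j0.

Lemma coefK b : coef (b *: d) = b.
Proof. by rewrite /coef mxE mulfK. Qed.

Lemma coefD y1 y2 : coef (y1 + y2) = coef y1 + coef y2.
Proof. by rewrite /coef mxE mulrDl. Qed.

Lemma inFd y : (exists b, y = b *: d) -> y = coef y *: d.
Proof. by case=> b ->; rewrite coefK. Qed.

Lemma indep_de (e : 'rV[F]_r) a b : ~ (exists c, e = c *: d) ->
  a *: d + b *: e = 0 -> a = 0 /\ b = 0.
Proof.
move=> ne h; case: (eqVneq b 0) => [b0|bn0].
  move: h; rewrite b0 scale0r addr0 => /eqP; rewrite scaler_eq0 (negbTE dnz) orbF.
  by move/eqP.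
exfalso; apply: ne; exists (- a / b).
apply: (scalerI bn0); rewrite scalerA mulrC divfK //.
by apply/eqP; rewrite scaleNr -addr_eq0 addrC h.
Qed.

Lemma rank1 y : y *m (W *m P) = coef (y *m (W *m P)) *: d.
Proof.
apply: inFd; apply: NNPP => ne.
have : (n + n <= r)%N.
  apply: (@indep2 F r n (\matrix_(k < n) (x0 *m Phi (E e0 k)))
                        (\matrix_(k < n) (y *m Phi (E e0 k)))) => c1 c2 h.
  suff H : forall l, c1 0 l = 0 /\ c2 0 l = 0.
    by split; apply/rowP => l; rewrite mxE; case: (H l).
  move=> l; apply: (indep_de ne).
  have := congr1 (fun v => v *m Phi (E l e0)) h.
  rewrite mulmxDl mul0mx -!mulmxA !(matrows_mul).
  have hz z : \matrix_(k < n) (z *m Phi (E e0 k) *m Phi (E l e0)) =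
               \matrix_(k < n) (if k == l then z *m (W *m P) else 0).
    apply/row_matrixP => k; rewrite !rowK -mulmxA KI mul_delta_mx_cond.
    by case: eqP => _; rewrite ?mulr1n ?mulr0n ?Phi0 ?mulmx0 ?mulmxA.
  by rewrite hz hz !sum_if.
move=> h; have := leq_trans h hr; move: hn2; clear; lia.
Qed.


Definition alpha := coef (d *m P).

Lemma dP : d *m P = alpha *: d.
Proof.
apply: inFd; exists (coef (x0 *m P *m (W *m P))).
rewrite -rank1 /d -!mulmxA; congr (x0 *m _).
by rewrite [LHS]mulmxA -PW -mulmxA PW.
Qed.

Lemma dW : d *m W = d *m P.
Proof. by rewrite /d -!mulmxA PW -PP !mulmxA. Qed.

Lemma alpha_nz : alpha != 0.
Proof.
apply/eqP => a0; have := pwP_nz 2; apply/negP; rewrite negbK; apply/eqP.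
apply: rowv0 => y.
have -> : pw 2 *m P = W *m P *m P by rewrite /pw /= mulmx1 -!mulmxA PP.
by rewrite mulmxA rank1 -scalemxAl dP a0 scale0r scaler0.
Qed.

Definition sigma a := coef (d *m Phi (a *: E e0 e0)).

Lemma PX a : P *m Phi (a *: E e0 e0) = Phi (a *: E e0 e0) *m P.
Proof.
by rewrite KI [RHS]KI2 -scalemxAr -scalemxAl !mul_delta_mx KIC.
Qed.

Lemma dPhi a : d *m Phi (a *: E e0 e0) = sigma a *: d.
Proof.
apply: inFd; exists (coef (x0 *m Phi (a *: E e0 e0) *m (W *m P))).
rewrite -rank1 /d -!mulmxA; congr (x0 *m _).
by rewrite PX !mulmxA KIC.
Qed.

Lemma sigma1 : sigma 1 = alpha.
Proof. by rewrite /sigma scale1r. Qed.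

Lemma sigma0 : sigma 0 = 0.
Proof. by rewrite /sigma scale0r Phi0 mulmx0 -(scale0r d) coefK. Qed.

Lemma sigmaD a b : sigma (a + b) = sigma a + sigma b.
Proof. by rewrite /sigma scalerDl hadd mulmxDr coefD. Qed.

Lemma sigmaM a b : alpha * sigma (a * b) = sigma a * sigma b.
Proof.
have h1 : d *m Phi (a *: E e0 e0) *m Phi (b *: E e0 e0) = (sigma a * sigma b) *: d.
  by rewrite dPhi -scalemxAl dPhi scalerA.
have h2 : d *m Phi (a *: E e0 e0) *m Phi (b *: E e0 e0) = (alpha * sigma (a * b)) *: d.
  rewrite -mulmxA KI mulmxA dW dP -scalemxAl -scalemxAl -scalemxAr mul_delta_mx scalerA.
  by rewrite mulrC dPhi scalerA.
by rewrite -(coefK (alpha * _)) -h2 h1 coefK.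
Qed.

Definition tauf a := sigma a / alpha.

Lemma tauD a b : tauf (a + b) = tauf a + tauf b.
Proof. by rewrite /tauf sigmaD mulrDl. Qed.

Lemma tauM a b : tauf (a * b) = tauf a * tauf b.
Proof.
have h' : sigma (a * b) = sigma a * sigma b / alpha.
  rewrite -sigmaM; have an := alpha_nz; field; exact: an.
rewrite /tauf h'; have an := alpha_nz; field; exact: an.
Qed.

Lemma tau1 : tauf 1 = 1.
Proof. by rewrite /tauf sigma1 divff // alpha_nz. Qed.

Definition tau := mkrm tauD tauM tau1.

Definition u (k : 'I_n) := d *m Phi (E e0 k).

Lemma uPhi (i j k : 'I_n) a :
  u i *m Phi (a *: E j k) = if i == j then sigma a *: u k else 0.
Proof.
rewrite /u -mulmxA KI mulmxA dW dP -scalemxAl -scalemxAr mul_delta_mx_cond.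
have [ij|ij] := eqVneq i j; last by rewrite mulr0n scaler0 Phi0 !mulmx0 scaler0.
rewrite mulr1n.
have h : d *m Phi (a *: E e0 e0) *m Phi (E e0 k) = alpha *: (d *m Phi (a *: E e0 k)).
  by rewrite -mulmxA KI mulmxA dW dP -scalemxAl -scalemxAl mul_delta_mx.
by rewrite -h dPhi -scalemxAl.
Qed.

Lemma uPhiA i A : u i *m Phi A = \sum_k sigma (A i k) *: u k.
Proof.
rewrite (Phi_expand hadd A) mulmx_sumr (bigD1 i) //= [X in _ + X]big1 ?addr0 => [|j ji].
  by rewrite mulmx_sumr; apply: eq_bigr => k _; rewrite uPhi eqxx.
by rewrite mulmx_sumr big1 // => k _; rewrite uPhi eq_sym (negbTE ji).
Qed.

Lemma uW i : u i *m W = alpha *: u i.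
Proof.
rewrite uPhiA (bigD1 i) //= big1 ?addr0 => [|k ki]; first by rewrite mxE eqxx sigma1.
by rewrite mxE eq_sym (negbTE ki) sigma0 scale0r.
Qed.

Lemma u0 : u e0 = alpha *: d.
Proof. by rewrite /u dP. Qed.

Local Notation U := (\matrix_(k < n) u k).

Lemma Uindep (c : 'rV[F]_n) : (forall l, c *m U *m Phi (E l e0) = 0) -> c = 0.
Proof.
move=> H; apply/rowP => l; rewrite mxE.
have := H l; rewrite -mulmxA matrows_mul.
have -> : \matrix_(k < n) (u k *m Phi (E l e0)) =
          \matrix_(k < n) (if k == l then alpha *: u e0 else 0).
  apply/row_matrixP => k; rewrite !rowK -[E l e0]scale1r uPhi sigma1.
  by case: eqP.
rewrite sum_if u0 !scalerA => /eqP; rewrite scaler_eq0 (negbTE dnz) orbF.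
have aa : alpha * alpha != 0 by rewrite mulf_neq0 // alpha_nz.
by rewrite -mulrA mulf_eq0 (negbTE aa) orbF => /eqP.
Qed.

Lemma UW : U *m W = alpha *: U.
Proof.
by apply/row_matrixP => k; rewrite row_mul rowZ !rowK uW.
Qed.

Lemma UPhi A : U *m Phi A = alpha *: (map_mx tau A *m U).
Proof.
apply/row_matrixP => i; rewrite row_mul rowZ row_mul rowK uPhiA mulmx_sum_row.
rewrite scaler_sumr; apply: eq_bigr => k _; rewrite rowK scalerA !mxE mkrmE /tauf.
by rewrite mulrC divfK // alpha_nz.
Qed.


Lemma lem0 (x : 'rV[F]_r) C : x *m Phi C != 0 ->
  (forall A, x *m W *m Phi A = 0) -> (n.+2 <= r)%N.
Proof.
move=> nz hx.
set z := x *m Phi C in nz *.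
apply: (@indep3 F r n U z x) => c c0 f h.
have zW : z *m W = 0 by rewrite /z -mulmxA -KIC mulmxA hx.
have xWW : x *m W *m W = 0 by rewrite hx.
have hcU : c *m U *m W = alpha *: (c *m U) by rewrite -mulmxA UW -scalemxAr.
have cU0 : c *m U = 0.
  have := congr1 (fun v => v *m W *m W) h.
  rewrite !mulmxDl -!scalemxAl zW xWW !mul0mx !scaler0 !addr0.
  rewrite hcU -scalemxAl hcU scalerA => /eqP; rewrite scaler_eq0.
  by rewrite mulf_eq0 orbb (negbTE alpha_nz) => /eqP.
have hc : c = 0 by apply: Uindep => l; rewrite cU0 mul0mx.
have zC : z *m Phi C = 0 by rewrite /z -mulmxA KI mulmxA hx.
have hf : f = 0.
  have := congr1 (fun v => v *m Phi C) h.
  rewrite hc !mulmxDl !mul0mx add0r -!scalemxAl zC scaler0 add0r -/z => /eqP.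
  by rewrite scaler_eq0 (negbTE nz) orbF => /eqP.
move: h; rewrite hc hf mul0mx add0r scale0r addr0 => /eqP.
by rewrite scaler_eq0 (negbTE nz) orbF => /eqP.
Qed.

Lemma downA k (x : 'rV[F]_r) :
  (forall A, x *m pw k *m Phi A = 0) -> forall A, x *m Phi A = 0.
Proof.
elim: k x => [|k IH] x H A.
  by have := H A; rewrite /pw /= mulmx1.
apply: (IH x) => {}A.
apply/eqP; apply: negbNE; apply/negP => nz.
case: k IH H nz => [|k] IH H nz.
  have nz' : x *m Phi A != 0 by move: nz; rewrite /pw /= mulmx1.
  have H' B : x *m W *m Phi B = 0 by have := H B; rewrite /pw /= mulmx1.
  by have := lem0 nz' H'; rewrite ltnNge hr.
by have := lemB hadd hzp hn2 (m := k.+1) isT nz H; rewrite ltnNge hr.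
Qed.

Lemma exists_w : exists w : 'rV[F]_r,
  (forall A, w *m Phi A = 0) /\ (r = n.+1 -> w != 0).
Proof.
case: (eqVneq r n.+1) => [hrn|hrn]; last by exists 0; split => [A|/eqP]; rewrite ?mul0mx // (negbTE hrn).
pose Bm := \matrix_(l < r, i < n) (Phi (E i e0) *m (W *m P)) l j0.
have : kermx Bm != 0.
  rewrite -mxrank_eq0 mxrank_ker subn_eq0 -ltnNge.
  by rewrite (leq_ltn_trans (rank_leq_col Bm)) // hrn.
case/exists_row => x hx; set w := x *m kermx Bm in hx.
have hw0 : w *m Bm = 0 by rewrite /w -mulmxA mulmx_ker mulmx0.
clearbody w.
have hi i : w *m Phi (E i e0) *m (W *m P) = 0.
  rewrite rank1 /coef.
  have -> : (w *m Phi (E i e0) *m (W *m P)) 0 j0 = 0.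
    have := congr1 (fun M : 'M[F]_(1, n) => M 0 i) hw0; rewrite [RHS]mxE => <-.
    rewrite -mulmxA !mxE; apply: eq_bigr => l _; rewrite !mxE.
    by [].
  by rewrite mul0r scale0r.
have h3 A : w *m pw 3 *m Phi A = 0.
  rewrite (Phi_expand hadd A) mulmx_sumr big1 // => j _.
  rewrite mulmx_sumr big1 // => k _.
  have e1 : W *m Phi (A j k *: E j k) = Phi (E j e0) *m Phi (A j k *: E e0 k).
    by rewrite [RHS]KI -scalemxAr mul_delta_mx.
  have e2 : Phi (E j e0) *m (W *m P) = W *m W *m Phi (E j e0).
    by rewrite mulmxA -KIC -mulmxA PhiP mulmxA.
  have e3 : w *m W *m W *m Phi (E j e0) = 0.
    by rewrite -2!mulmxA (mulmxA W) -e2 mulmxA hi.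
  by rewrite /pw /= mulmx1 -!mulmxA e1 !mulmxA e3 mul0mx.
exists w; split => [|_ //]; exact: (downA h3).
Qed.

End Rank1.

Lemma partA_core (x0 : 'rV[F]_r) (j0 : 'I_r) (hj0 : (x0 *m (W *m P)) 0 j0 != 0) :
  (r = n \/ r = n.+1) /\
  exists (Hr : (n + (r - n))%N = r) (alpha : F) (S : 'M[F]_r)
         (tau : {rmorphism F -> F}),
    [/\ alpha != 0, S \in unitmx &
        forall A : 'M[F]_n,
          Phi A = alpha *: (S *m castmx (Hr, Hr)
                     (block_mx (map_mx tau A) 0 0 (0 : 'M[F]_(r - n)))
                   *m invmx S)].
Proof.
set U := \matrix_(k < n) u x0 k.
have hnr : (n <= r)%N.
  by apply: (@indep_le F r n U) => c hc; apply: (Uindep hj0) => l; rewrite hc mul0mx.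
split; first by move: hnr hr; clear; lia.
exists (subnKC hnr), (alpha x0 j0).
have [w [hw hwnz]] := exists_w hj0.
pose K : 'M[F]_(r - n, r) := const_mx 1 *m w.
have hK A : K *m Phi A = 0 by rewrite /K -mulmxA hw mulmx0.
have hind (v : 'rV_(n + (r - n))) : v *m col_mx U K = 0 -> v = 0.
  rewrite -[v]hsubmxK mul_row_col => h.
  have hv1 : lsubmx v = 0.
    apply: (Uindep hj0) => l.
    have := congr1 (fun x => x *m Phi (E l e0)) h.
    by rewrite mulmxDl mul0mx -(mulmxA (rsubmx v)) hK mulmx0 addr0.
  have hv2 : rsubmx v = 0.
    apply/rowP => i; rewrite [RHS]mxE.
    case: (eqVneq r n.+1) => [hrn|hrn]; last first.
      have := ltn_ord i; move: hnr hr hrn; clear.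
      move=> h1 h2 /eqP h3 h4; exfalso; lia.
    have alleq (j1 j2 : 'I_(r - n)) : j1 = j2.
      have hrn1 : (r - n = 1)%N by rewrite hrn subSnn.
      apply: val_inj => /=; have := ltn_ord j1; have := ltn_ord j2.
      move: hrn1; clear; lia.
    move: h; rewrite hv1 mul0mx add0r /K mulmxA.
    rewrite [_ *m const_mx 1]mx11_scalar mul_scalar_mx => /eqP.
    rewrite scaler_eq0 (negbTE (hwnz hrn)) orbF mxE => /eqP hs.
    rewrite -hs (bigD1 i) //= big1 ?addr0 => [|j ji]; first by rewrite [const_mx _ _ _]mxE mulr1.
    by move: ji; rewrite (alleq j i) eqxx.
  by rewrite hv1 hv2 row_mx0.
have [S [Su HS]] := assemble (subnKC hnr) hind (UPhi hj0) hK.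
exists S, (tau hj0); split => //; exact: alpha_nz.
Qed.

Lemma partA :
  (r = n \/ r = n.+1) /\
  exists (Hr : (n + (r - n))%N = r) (alpha : F) (S : 'M[F]_r)
         (tau : {rmorphism F -> F}),
    [/\ alpha != 0, S \in unitmx &
        forall A : 'M[F]_n,
          Phi A = alpha *: (S *m castmx (Hr, Hr)
                     (block_mx (map_mx tau A) 0 0 (0 : 'M[F]_(r - n)))
                   *m invmx S)].
Proof.
have := pwP_nz 1; rewrite /pw /= mulmx1 => /exists_row [x0 hx0].
have [j0 hj0] : exists j0, (x0 *m (W *m P)) 0 j0 != 0.
  apply: NNPP => H; move/eqP: hx0; apply; apply/rowP => j; rewrite [RHS]mxE.
  apply/eqP; apply: negbNE; apply/negP => hj; apply: H; by exists j.
exact: partA_core hj0.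
Qed.

End PartA.

Unset Implicit Arguments.

Theorem proposition3p11 (F : fieldType) (n r : nat) (Phi : 'M[F]_n -> 'M[F]_r)
  (hn : n <> 1%N) (hr : (r <= n.+1)%N)
  (hadd : additive_map Phi) (hzp : preserves_zero_products Phi) :
  (~ mx_nilpotent (Phi 1%:M) ->
     (r = n \/ r = n.+1) /\
     exists (Hr : (n + (r - n))%N = r) (alpha : F) (S : 'M[F]_r)
            (tau : {rmorphism F -> F}),
       [/\ alpha != 0, S \in unitmx &
           forall A : 'M[F]_n,
             Phi A = alpha *: (S *m castmx (Hr, Hr)
                        (block_mx (map_mx tau A) 0 0 (0 : 'M[F]_(r - n)))
                      *m invmx S)])
  /\
  (mx_nilpotent (Phi 1%:M) ->
     ((2%N \in [pchar F]) /\ ~ finite_field F -> F_linear_map Phi) ->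
     forall A B : 'M[F]_n, Phi A *m Phi B = 0).
Proof.
case: n Phi hn hr hadd hzp => [|[|n]] Phi hn hr hadd hzp //.
  have h0 (A : 'M[F]_0) : Phi A = 0 by rewrite (flatmx0 A) (Phi0 hadd).
  split=> [hnil|_ _ A B]; last by rewrite h0 mul0mx.
  by exfalso; apply: hnil; exists 1%N; rewrite /= h0 mul0mx.
have hn2 : (1 < n.+2)%N by [].
split=> [hnil|hnil _]; first exact: partA hadd hzp hn2 hr hnil.
exact: partB hadd hzp hn2 hr hnil.
Qed.
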